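(* Let $k_s>0$ and $c_\sigma>0$ with $c_\sigma\neq 1$, and let $\eta$ be a random variable on $(0,\infty)$ with probability density $$f_\eta(\eta)=e^{-k_s^2}\,(1+k_s^2)\,c_\sigma\; e^{\frac{\eta k_s^2}{\eta+c_\sigma}}\;\frac{\eta+\frac{c_\sigma}{1+k_s^2}}{(\eta+c_\sigma)^3},\qquad \eta>0 .$$ Then the average channel capacity per unit bandwidth $\bar C_{h,u}=\mathbb{E}[\log_2(1+\eta)]=\int_0^\infty \log_2(1+\eta)f_\eta(\eta)\,d\eta$ equals $$\bar C_{h,u}=\frac{1}{\log 2}\left(\log\!\left(c_\sigma k_s^2\right)+E_1(k_s^2)+\zeta+\frac{e^{-\frac{c_\sigma k_s^2}{c_\sigma-1}}}{c_\sigma-1}\left(\mathrm{Ei}\!\left(\frac{c_\sigma k_s^2}{c_\sigma-1}\right)-\mathrm{Ei}\!\left(\frac{k_s^2}{c_\sigma-1}\right)\right)\right),$$ where $E_1(x)=\int_x^\infty \frac{e^{-t}}{t}\,dt$ for $x>0$, $\mathrm{Ei}(x)=-\,\mathrm{PV}\!\int_{-x}^{\infty}\frac{e^{-t}}{t}\,dt$ is the standard (principal value) exponential integral, $\zeta\approx 0.577$ is the Euler–Mascheroni constant, and $\log$ is the natural logarithm.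
   Context: Setting: a user $UE0$ is served by two cooperating antenna arrays with zero-forcing position-based joint transmit precoding over Rician channels with factor $K$; its SINR is $\eta=|x_s|^2/|x_I|^2$ with $x_s$ the signal component and $x_I$ the interference-plus-noise component. For fixed channel statistics and fixed user/interferer locations, the paper approximates $x_s$ by a complex Gaussian $\mathcal{CN}(\mu_s,\sigma_s^2)$ and $x_I$ by an independent $\mathcal{CN}(0,\sigma_I^2)$ (moment matching of Gaussian mixtures), which yields the density of $\eta$ displayed in the claim, with $k_s=|\mu_s|/\sigma_s$ (ratio of the absolute mean signal amplitude to its standard deviation) and $c_\sigma=\sigma_s^2/\sigma_I^2$ (ratio of signal variance to interference-plus-noise variance). The average channel capacity per unit bandwidth is $\mathbb{E}[\log_2(1+\eta)]$ under this density. *)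

(* Defs.v *)
From Stdlib Require Import Reals.
From Coquelicot Require Import Coquelicot.
Open Scope R_scope.

Definition expint_integrand (t : R) : R := exp (- t) / t.

Definition ExpInt_E1 (x : R) : R :=
  RInt_gen expint_integrand (at_point x) (Rbar_locally p_infty).

(* Integral of e^{-t}/t over [a, +oo) minus the open hole (-eps, eps), eps > 0. *)
Definition pv_piece (a eps : R) : R :=
  if Rle_dec eps a then
    RInt_gen expint_integrand (at_point a) (Rbar_locally p_infty)
  else if Rle_dec a (- eps) then
    RInt expint_integrand a (- eps)
    + RInt_gen expint_integrand (at_point eps) (Rbar_locally p_infty)
  else
    RInt_gen expint_integrand (at_point eps) (Rbar_locally p_infty).

(* ExpInt_Ei(x) = - PV int_{-x}^oo e^{-t}/t dt, the principal value being
   lim_{eps -> 0+} of pv_piece (-x) eps (written as a two-sided punctured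
   limit of eps |-> pv_piece (-x) |eps|, which is the same limit). *)
Definition ExpInt_Ei (x : R) : R :=
  - real (Lim (fun eps => pv_piece (- x) (Rabs eps)) 0).

Definition euler_gamma : R :=
  real (Lim_seq (fun n => sum_f_R0 (fun k => / INR (S k)) n - ln (INR (S n)))).

Definition log2 (x : R) : R := ln x / ln 2.

Definition f_eta (ks cs eta : R) : R :=
  exp (- ks ^ 2) * (1 + ks ^ 2) * cs * exp (eta * ks ^ 2 / (eta + cs))
  * (eta + cs / (1 + ks ^ 2)) / (eta + cs) ^ 3.

(* Main.v *)
Require Import Defs.
From Stdlib Require Import Reals Lra Lia.
From Coquelicot Require Import Coquelicot.
Open Scope R_scope.

Definition kf (x : R) : R := if Req_EM_T x 0 then 1 else (exp x - 1) / x.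
Definition KF (x : R) : R := RInt kf 0 x.

Lemma kf_nz x : x <> 0 -> kf x = (exp x - 1) / x.
Proof. intros H; unfold kf; destruct (Req_EM_T x 0); [contradiction|reflexivity]. Qed.

Lemma kf_mul x : x * kf x = exp x - 1.
Proof.
  unfold kf; destruct (Req_EM_T x 0) as [->|H].
  - rewrite exp_0; ring.
  - field; auto.
Qed.

Lemma kf_cont x : continuous kf x.
Proof.
  apply continuity_pt_filterlim.
  destruct (Req_EM_T x 0) as [->|H].
  - intros eps Heps.
    destruct (derivable_pt_lim_exp_0 eps Heps) as [d Hd].
    exists d; split; [apply cond_pos|].
    intros y [_ Hy]. simpl in *. unfold R_dist, Rminus in *. rewrite ?Ropp_0, ?Rplus_0_r in Hy.
    destruct (Req_EM_T y 0) as [->|Hy0].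
    + rewrite Rplus_opp_r, Rabs_R0; lra.
    + rewrite kf_nz by auto.
      assert (E0 : kf 0 = 1) by (unfold kf; destruct (Req_EM_T 0 0); lra).
      rewrite E0.
      specialize (Hd y Hy0 Hy). rewrite Rplus_0_l, exp_0 in Hd. exact Hd.
  - apply (proj2 (continuity_pt_filterlim _ _)).
    change (continuous kf x). apply continuous_ext_loc with (g := fun y => (exp y - 1) / y).
    + assert (Hp : 0 < Rabs x) by (apply Rabs_pos_lt; auto).
      exists (mkposreal _ Hp). intros y Hy. simpl in Hy.
      unfold ball in Hy; simpl in Hy; unfold AbsRing_ball, abs, minus, plus, opp in Hy; simpl in Hy.
      symmetry; apply kf_nz. intros ->. rewrite Rplus_0_l, Rabs_Ropp in Hy. lra.
    + apply (@ex_derive_continuous R_AbsRing R_NormedModule). auto_derive. auto.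
Qed.

Lemma KF_deriv x : is_derive KF x (kf x).
Proof.
  apply is_derive_RInt with 0.
  - apply filter_forall; intros b. unfold KF. apply (@RInt_correct R_CompleteNormedModule).
    apply ex_RInt_continuous; intros; apply kf_cont.
  - apply kf_cont.
Qed.

Lemma KF_0 : KF 0 = 0.
Proof. unfold KF; rewrite RInt_point; reflexivity. Qed.

Lemma KF_cont x : continuous KF x.
Proof. apply (@ex_derive_continuous R_AbsRing R_NormedModule). exists (kf x); apply KF_deriv. Qed.

Lemma KF_Derive x : Derive KF x = kf x.
Proof. apply is_derive_unique, KF_deriv. Qed.

Lemma mono_deriv f df a b : a <= b ->
  (forall x, a <= x <= b -> is_derive f x (df x)) ->
  (forall x, a <= x <= b -> 0 <= df x) -> f a <= f b.
Proof.
  intros Hab Hd Hp.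
  destruct (MVT_gen f a b df) as [c [Hc E]].
  - intros x Hx. rewrite Rmin_left, Rmax_right in Hx by lra. apply Hd; lra.
  - intros x Hx. rewrite Rmin_left, Rmax_right in Hx by lra.
    apply continuity_pt_filterlim.
    apply (@ex_derive_continuous R_AbsRing R_NormedModule). exists (df x); apply Hd; lra.
  - rewrite Rmin_left, Rmax_right in Hc by lra.
    assert (0 <= df c * (b - a)) by (apply Rmult_le_pos; [apply Hp; lra| lra]).
    lra.
Qed.

Lemma exp_pow_nat y m : exp y ^ m = exp (INR m * y).
Proof.
  induction m as [|m IH].
  - simpl. rewrite Rmult_0_l, exp_0; reflexivity.
  - rewrite S_INR, <- tech_pow_Rmult, IH, <- exp_plus. f_equal; ring.
Qed.

Lemma bernoulli y m : -1 <= y -> 1 + INR m * y <= (1 + y) ^ m.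
Proof.
  intros Hy. induction m as [|m IH].
  - simpl; lra.
  - rewrite S_INR, <- tech_pow_Rmult.
    assert (0 <= INR m) by apply pos_INR.
    nra.
Qed.

Lemma key_ineq (t : R) (n : nat) : 0 < t <= INR (S n) ->
  0 <= exp (- t) - (1 - t / INR (S n)) ^ (S n) <= t ^ 2 * exp (- t) / INR (S n).
Proof.
  intros Ht. set (N := INR (S n)) in *.
  assert (HN : 0 < N) by (unfold N; apply lt_0_INR; lia).
  assert (Hx0 : 0 <= 1 - t / N).
  { assert (t / N <= 1) by (apply Rmult_le_reg_r with N; [lra|]; unfold Rdiv; rewrite Rmult_assoc, Rinv_l; lra). lra. }
  assert (EN : exp (- t) = exp (- t / N) ^ S n).
  { rewrite exp_pow_nat. f_equal. fold N. field. lra. }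
  split.
  - rewrite EN. cut ((1 - t / N) ^ S n <= exp (- t / N) ^ S n); [lra|]. apply pow_incr. split; [exact Hx0|].
    replace (1 - t / N) with (1 + (- t / N)) by (unfold Rdiv; ring). apply exp_ineq1_le.
  - assert (H1 : (1 + t / N) ^ S n <= exp t).
    { replace (exp t) with (exp (t / N) ^ S n).
      - apply pow_incr; split.
        + assert (0 <= t / N) by (apply Rmult_le_pos; [lra| left; apply Rinv_0_lt_compat; lra]). lra.
        + apply exp_ineq1_le.
      - rewrite exp_pow_nat; f_equal; fold N; field; lra. }
    assert (H2 : 1 - t ^ 2 / N <= ((1 + t / N) * (1 - t / N)) ^ S n).
    { replace ((1 + t / N) * (1 - t / N)) with (1 + (- (t ^ 2 / N ^ 2))) by (field; lra).
      replace (1 - t ^ 2 / N) with (1 + N * (- (t ^ 2 / N ^ 2))) by (field; lra).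
      apply bernoulli.
      assert (t ^ 2 / N ^ 2 <= 1).
      { apply Rmult_le_reg_r with (N ^ 2). nra. unfold Rdiv. rewrite Rmult_assoc, Rinv_l by nra. nra. }
      lra. }
    rewrite Rpow_mult_distr in H2.
    assert (H3 : 0 <= (1 - t / N) ^ S n) by (apply pow_le; lra).
    assert (H4 : 1 - t ^ 2 / N <= exp t * (1 - t / N) ^ S n) by nra.
    assert (H5 : exp (- t) * exp t = 1) by (rewrite <- exp_plus, Rplus_opp_l, exp_0; reflexivity).
    assert (H6 : 0 < exp (- t)) by apply exp_pos.
    assert (H7 : exp (- t) * (1 - t ^ 2 / N) <= (1 - t / N) ^ S n).
    { replace ((1 - t / N) ^ S n) with (exp (- t) * (exp t * (1 - t / N) ^ S n)) by (rewrite <- Rmult_assoc, H5; ring).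
      apply Rmult_le_compat_l; lra. }
    replace (t ^ 2 * exp (- t) / N) with (exp (- t) - exp (- t) * (1 - t ^ 2 / N)) by (field; lra).
    lra.
Qed.

Lemma Qd (N : R) m t : N <> 0 ->
  is_derive (fun t => sum_f_R0 (fun j => (1 - t / N) ^ (S j) / INR (S j)) m) t
    (- sum_f_R0 (fun j => (1 - t / N) ^ j) m / N).
Proof.
  intros HN. induction m as [|m IH].
  - simpl. auto_derive; auto. field; auto.
  - assert (H2 : is_derive (fun t => (1 - t / N) ^ (S (S m)) / INR (S (S m))) t
                   (- (1 - t / N) ^ (S m) / N)).
    { auto_derive; [exact I|].
      change (match m with 0%nat => 1 | S _ => INR m + 1 end + 1) with (INR (S m) + 1).
      replace (1 + - (t * / N)) with (1 - t / N) by reflexivity.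
      rewrite <- (tech_pow_Rmult _ m).
      assert (0 < INR (S m)) by (apply lt_0_INR; lia).
      field. lra. }
    pose proof (is_derive_plus _ _ _ _ _ IH H2) as H3.
    apply is_derive_ext with (f := fun t => plus (sum_f_R0 (fun j => (1 - t / N) ^ (S j) / INR (S j)) m)
             ((1 - t / N) ^ (S (S m)) / INR (S (S m)))).
    { intros; reflexivity. }
    replace (- sum_f_R0 (fun j => (1 - t / N) ^ j) (S m) / N) with
      (plus (- sum_f_R0 (fun j => (1 - t / N) ^ j) m / N) (- (1 - t / N) ^ (S m) / N)).
    + exact H3.
    + rewrite tech5. unfold plus; simpl. field; auto.
Qed.

Lemma KFneg_deriv t : is_derive (fun t => KF (- t)) t (- kf (- t)).
Proof.
  auto_derive.
  - exists (kf (- t)); apply KF_deriv.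
  - rewrite KF_Derive; ring.
Qed.

Lemma is_derive_eq (f : R -> R) x l l' : is_derive f x l -> l = l' -> is_derive f x l'.
Proof. intros H ->; exact H. Qed.

Lemma sum_zero m : sum_f_R0 (fun _ => 0) m = 0.
Proof. induction m as [|m IH]; simpl; [|rewrite IH]; ring. Qed.

Definition Hn (n : nat) : R := sum_f_R0 (fun k => / INR (S k)) n.

Lemma D_bound (n : nat) : 0 <= KF (- INR (S n)) + Hn n <= / INR (S n).
Proof.
  set (N := INR (S n)).
  assert (HN : 0 < N) by (unfold N; apply lt_0_INR; lia).
  set (Qp := fun t => sum_f_R0 (fun j => (1 - t / N) ^ (S j) / INR (S j)) n).
  assert (Q0 : Qp 0 = Hn n).
  { unfold Qp, Hn. apply sum_eq. intros i _. replace (1 - 0 / N) with 1 by (field; lra).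
    rewrite pow1. field. apply not_0_INR; lia. }
  assert (QN : Qp N = 0).
  { unfold Qp. replace (1 - N / N) with 0 by (field; lra).
    transitivity (sum_f_R0 (fun _ => 0) n); [|apply sum_zero].
    apply sum_eq. intros i _. simpl. unfold Rdiv; ring. }
  set (D := fun t => KF (- t) - Qp t + Qp 0).
  set (dD := fun t => - kf (- t) - (- sum_f_R0 (fun j => (1 - t / N) ^ j) n / N)).
  assert (Dd : forall t, is_derive D t (dD t)).
  { intros t.
    pose proof (is_derive_minus _ _ t _ _ (KFneg_deriv t) (Qd N n t ltac:(lra))) as H1.
    pose proof (is_derive_plus _ (fun _ => Qp 0) t _ _ H1 (is_derive_const (Qp 0) t)) as H2.
    eapply is_derive_ext; [|eapply is_derive_eq; [exact H2|]].
    - intros; reflexivity.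
    - rewrite plus_zero_r. reflexivity. }
  assert (dD_eq : forall t, 0 < t <= N -> dD t = (exp (- t) - (1 - t / N) ^ (S n)) / t).
  { intros t Ht. unfold dD. rewrite kf_nz by lra. rewrite tech3.
    - replace (1 - (1 - t / N)) with (t / N) by ring. field. lra.
    - intro C. assert (t / N = 0) by lra. unfold Rdiv in H. apply Rmult_integral in H.
      destruct H; [lra|]. apply Rinv_neq_0_compat in H; lra. }
  assert (dD0 : dD 0 = 0).
  { unfold dD. replace (- 0) with 0 by ring.
    assert (E0 : kf 0 = 1) by (unfold kf; destruct (Req_EM_T 0 0); lra). rewrite E0.
    replace (1 - 0 / N) with 1 by (field; lra).
    rewrite (sum_eq _ (fun _ => 1)) by (intros; apply pow1).
    rewrite sum_cte. fold N. field. lra. }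
  assert (Dlow : D 0 <= D N).
  { apply mono_deriv with dD; [lra| intros; apply Dd |].
    intros t [Ht1 Ht2]. destruct (Req_dec t 0) as [->|Ht0]; [rewrite dD0; lra|].
    rewrite dD_eq by lra. destruct (key_ineq t n) as [K1 K2]; [fold N; lra|]. fold N in K1, K2.
    apply Rmult_le_pos; [lra| left; apply Rinv_0_lt_compat; lra]. }
  set (Rf := fun t => - (1 + t) * exp (- t) / N).
  assert (Rd : forall t, is_derive Rf t (t * exp (- t) / N)).
  { intros t. unfold Rf. auto_derive; auto. field. lra. }
  assert (Dup : Rf 0 - D 0 <= Rf N - D N).
  { apply (mono_deriv (fun t => Rf t - D t) (fun t => t * exp (- t) / N - dD t)); [lra| |].
    { intros x _. eapply is_derive_ext; [| apply (is_derive_minus _ _ x _ _ (Rd x) (Dd x))]; intros; reflexivity. }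
    intros t [Ht1 Ht2]. destruct (Req_dec t 0) as [->|Ht0]; [rewrite dD0; unfold Rdiv; lra|].
    rewrite dD_eq by lra. destruct (key_ineq t n) as [K1 K2]; [fold N; lra|].
    fold N in K1, K2.
    assert ((exp (- t) - (1 - t / N) ^ S n) / t <= t * exp (- t) / N).
    { apply Rmult_le_reg_r with t; [lra|].
      replace ((exp (- t) - (1 - t / N) ^ S n) / t * t) with (exp (- t) - (1 - t / N) ^ S n) by (field; lra).
      replace (t * exp (- t) / N * t) with (t ^ 2 * exp (- t) / N) by (field; lra). exact K2. }
    lra. }
  unfold D in Dlow, Dup. rewrite Ropp_0, KF_0, QN, Q0 in Dlow, Dup.
  unfold Rf in Dup.
  assert (0 < exp (- N)) by apply exp_pos.
  assert ((1 + N) * exp (- N) / N > 0) by (apply Rdiv_lt_0_compat; nra).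
  split; [lra|].
  replace (- (1 + 0) * exp (- 0) / N) with (- / N) in Dup by (rewrite Ropp_0, exp_0; field; lra).
  replace (- (1 + N) * exp (- N) / N) with (- ((1 + N) * exp (- N) / N)) in Dup by (field; lra).
  lra.
Qed.

Definition Lf (y : R) : R := ln y + KF (- y).

Lemma Lf_deriv y : 0 < y -> is_derive Lf y (exp (- y) / y).
Proof.
  intros Hy. unfold Lf. auto_derive.
  - split; auto. split; auto. exists (kf (- y)); apply KF_deriv.
  - rewrite KF_Derive, kf_nz by lra. field. lra.
Qed.

Lemma Lf_mono x y : 0 < x -> x <= y -> Lf x <= Lf y.
Proof.
  intros Hx Hxy. apply mono_deriv with (fun t => exp (- t) / t); auto.
  - intros t Ht; apply Lf_deriv; lra.
  - intros t Ht. apply Rlt_le, Rdiv_lt_0_compat; [apply exp_pos|lra].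
Qed.

Lemma Lf_bound y : 1 <= y -> Lf y <= Lf 1 + 1.
Proof.
  intros Hy.
  assert (H : - exp (- 1) - Lf 1 <= - exp (- y) - Lf y).
  { apply (mono_deriv (fun t => - exp (- t) - Lf t) (fun t => exp (- t) - exp (- t) / t)); auto.
    - intros t Ht. eapply is_derive_ext; [|eapply is_derive_eq; [apply (is_derive_minus (fun t => - exp (- t)) Lf t); [auto_derive; auto | apply Lf_deriv; lra]|]].
      + intros; reflexivity.
      + unfold minus, plus, opp; simpl. ring.
    - intros t Ht. assert (0 < exp (- t)) by apply exp_pos.
      assert (exp (- t) / t <= exp (- t)).
      { unfold Rdiv. rewrite <- (Rmult_1_r (exp (- t))) at 2. apply Rmult_le_compat_l; [lra|].
        rewrite <- Rinv_1. apply Rinv_le_contravar; lra. }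
      lra. }
  assert (0 < exp (- y)) by apply exp_pos.
  assert (exp (- 1) <= 1).
  { rewrite <- exp_0. left. apply exp_increasing. lra. }
  lra.
Qed.

Lemma ball_R (l e z : R) : Rabs (z - l) < e -> ball l e z.
Proof. intros H. unfold ball; simpl; unfold AbsRing_ball, abs, minus, plus, opp; simpl. exact H. Qed.

Lemma gamma_L : exists l, euler_gamma = - l /\ filterlim Lf (Rbar_locally p_infty) (locally l).
Proof.
  set (u := fun n => Lf (INR (S n))).
  assert (Hg : Un_growing u).
  { intros n. unfold u. apply Lf_mono. apply lt_0_INR; lia. rewrite (S_INR (S n)); lra. }
  assert (Hb : has_ub u).
  { exists (Lf 1 + 1). intros z [n ->]. unfold u. apply Lf_bound.
    rewrite S_INR. assert (0 <= INR n) by apply pos_INR. lra. }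
  destruct (growing_cv u Hg Hb) as [l Hl].
  exists l. split.
  - unfold euler_gamma.
    assert (Hs : is_lim_seq (fun n => sum_f_R0 (fun k => / INR (S k)) n - ln (INR (S n))) (0 - l)).
    { apply is_lim_seq_ext with (fun n => (KF (- INR (S n)) + Hn n) - u n).
      { intros n. unfold u, Lf, Hn. ring. }
      apply is_lim_seq_minus'.
      - apply is_lim_seq_le_le with (u := fun _ => 0) (w := fun n => / INR (S n)).
        + intros n. apply D_bound.
        + apply is_lim_seq_const.
        + replace (Finite 0) with (Rbar_inv p_infty) by reflexivity.
          apply (is_lim_seq_inv (fun n => INR (S n))); [|discriminate].
          apply (is_lim_seq_incr_1 INR). apply is_lim_seq_INR.
      - apply is_lim_seq_Reals. exact Hl. }
    rewrite (is_lim_seq_unique _ _ Hs). simpl. ring.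
  - apply filterlim_locally. intros eps.
    destruct (Hl eps (cond_pos eps)) as [N HN].
    exists (INR (S N)). intros y Hy. apply ball_R.
    assert (HyN : u N <= Lf y) by (apply Lf_mono; [apply lt_0_INR; lia| lra]).
    destruct (INR_unbounded y) as [m Hm].
    assert (Hym : Lf y <= u m).
    { unfold u. apply Lf_mono. apply Rlt_trans with (INR (S N)); [apply lt_0_INR; lia| lra].
      rewrite S_INR; lra. }
    assert (Hul : u m <= l) by (apply growing_ineq; auto).
    specialize (HN N (Nat.le_refl N)). unfold R_dist in HN.
    rewrite Rabs_left1 in HN by lra.
    rewrite Rabs_left1 by lra. lra.
Qed.

Lemma RInt_gen_anti {Fa Fb : (R -> Prop) -> Prop} {FFa : Filter Fa} {FFb : Filter Fb}
  (f F : R -> R) (la lb : R) :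
  filter_prod Fa Fb (fun ab => forall x, Rmin (fst ab) (snd ab) <= x <= Rmax (fst ab) (snd ab) ->
       is_derive F x (f x) /\ continuous f x) ->
  filterlim F Fa (locally la) -> filterlim F Fb (locally lb) ->
  is_RInt_gen f Fa Fb (lb - la).
Proof.
  intros H Ha Hb. unfold is_RInt_gen.
  apply filterlimi_lim_ext_loc with (f := fun ab => plus (F (snd ab)) (opp (F (fst ab)))).
  - apply filter_imp with (2 := H). intros [a b] Hab. simpl in *.
    apply (is_RInt_derive F f a b); intros; apply Hab; auto.
  - apply (filterlim_comp_2 (G := locally lb) (H := locally (opp la)) (fun ab => F (snd ab)) (fun ab => opp (F (fst ab))) plus).
    + apply filterlim_comp with (2 := Hb). apply filterlim_snd.
    + apply filterlim_comp with (G := locally la).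
      * apply filterlim_comp with (2 := Ha). apply filterlim_fst.
      * apply (@filterlim_opp R_AbsRing R_NormedModule la).
    + apply (filterlim_plus lb (opp la)).
Qed.

Definition Ef (x : R) : R := - euler_gamma - Lf x.

Lemma expint_cont t : t <> 0 -> continuous expint_integrand t.
Proof.
  intros Ht. apply (@ex_derive_continuous R_AbsRing R_NormedModule). unfold expint_integrand. auto_derive. auto.
Qed.

Lemma E1_is x : 0 < x -> is_RInt_gen expint_integrand (at_point x) (Rbar_locally p_infty) (Ef x).
Proof.
  intros Hx.
  destruct gamma_L as [l [Hg Hl]].
  replace (Ef x) with (l - Lf x) by (unfold Ef; rewrite Hg; ring).
  apply RInt_gen_anti with (F := Lf).
  - exists (fun a => a = x) (fun b => x < b).
    + reflexivity.
    + exists x. auto.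
    + intros a b -> Hb. simpl. rewrite Rmin_left, Rmax_right by lra. intros t Ht. split.
      * eapply is_derive_eq. apply Lf_deriv; lra. reflexivity.
      * apply expint_cont; lra.
  - intros P HP. apply (locally_singleton _ _ HP).
  - exact Hl.
Qed.

Lemma E1_val x : 0 < x -> ExpInt_E1 x = Ef x.
Proof. intros Hx. unfold ExpInt_E1. apply is_RInt_gen_unique. apply E1_is; auto. Qed.

Lemma RInt_gen_E1 x : 0 < x -> RInt_gen expint_integrand (at_point x) (Rbar_locally p_infty) = Ef x.
Proof. intros Hx. apply is_RInt_gen_unique. apply E1_is; auto. Qed.

Lemma RInt_neg a b : a < 0 -> b < 0 ->
  RInt expint_integrand a b = (ln (- b) + KF (- b)) - (ln (- a) + KF (- a)).
Proof.
  intros Ha Hb. apply is_RInt_unique.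
  apply (is_RInt_derive (fun t => ln (- t) + KF (- t)) expint_integrand a b).
  - intros t Ht. assert (t < 0) by (destruct (Rle_dec a b); [rewrite Rmax_right in Ht | rewrite Rmax_left in Ht]; lra).
    auto_derive.
    + split; [lra|]. split; auto. exists (kf (- t)); apply KF_deriv.
    + rewrite KF_Derive, kf_nz by lra. unfold expint_integrand. field. lra.
  - intros t Ht. assert (t < 0) by (destruct (Rle_dec a b); [rewrite Rmax_right in Ht | rewrite Rmax_left in Ht]; lra).
    apply expint_cont; lra.
Qed.

Lemma eps_small x : 0 < x -> eventually (fun n : nat => / (INR n + 1) <= x).
Proof.
  intros Hx. destruct (INR_unbounded (/ x)) as [N HN]. exists N. intros n Hn.
  apply le_INR in Hn.
  rewrite <- (Rinv_inv x). apply Rinv_le_contravar. apply Rinv_0_lt_compat; lra. lra.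
Qed.

Lemma Ei_val x : x <> 0 -> ExpInt_Ei x = euler_gamma + ln (Rabs x) + KF x.
Proof.
  intros Hx. unfold ExpInt_Ei, Lim.
  assert (Hpos : forall n, 0 < / (INR n + 1)).
  { intros n. apply Rinv_0_lt_compat. assert (0 <= INR n) by apply pos_INR. lra. }
  destruct (Rlt_or_le x 0) as [Hneg|Hpx].
  - assert (Hl : is_lim_seq (fun n => pv_piece (- x) (Rabs (Rbar_loc_seq 0 n))) (Ef (- x))).
    { apply is_lim_seq_ext_loc with (fun _ => Ef (- x)); [|apply is_lim_seq_const].
      destruct (eps_small (- x)) as [N HN]; [lra|]. exists N. intros n Hn.
      simpl. rewrite Rplus_0_l, Rabs_pos_eq by (left; apply Hpos).
      unfold pv_piece. destruct (Rle_dec (/ (INR n + 1)) (- x)) as [_|C].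
      + symmetry. apply RInt_gen_E1. lra.
      + exfalso. apply C. apply HN; auto. }
    rewrite (is_lim_seq_unique _ _ Hl). simpl. unfold Ef, Lf.
    rewrite Rabs_left by lra. rewrite Ropp_involutive. ring.
  - assert (Hp : 0 < x) by lra.
    assert (Hl : is_lim_seq (fun n => pv_piece (- x) (Rabs (Rbar_loc_seq 0 n)))
                   ((KF 0 - KF (- 0)) - ln x - KF x - euler_gamma)).
    { apply is_lim_seq_ext_loc with
        (fun n => (KF (Rbar_loc_seq 0 n) - KF (- Rbar_loc_seq 0 n)) - ln x - KF x - euler_gamma).
      - destruct (eps_small x) as [N HN]; [lra|]. exists N. intros n Hn.
        simpl. rewrite Rplus_0_l, Rabs_pos_eq by (left; apply Hpos).
        specialize (HN n Hn). specialize (Hpos n).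
        unfold pv_piece. destruct (Rle_dec (/ (INR n + 1)) (- x)) as [C|_]; [lra|].
        destruct (Rle_dec (- x) (- / (INR n + 1))) as [_|C]; [|lra].
        rewrite RInt_gen_E1 by lra. rewrite RInt_neg by lra.
        unfold Ef, Lf. rewrite !Ropp_involutive. ring.
      - assert (He : is_lim_seq (Rbar_loc_seq 0) 0) by apply is_lim_seq_Rbar_loc_seq.
        apply is_lim_seq_minus'; [|apply is_lim_seq_const].
        apply is_lim_seq_minus'; [|apply is_lim_seq_const].
        apply is_lim_seq_minus'; [|apply is_lim_seq_const].
        apply is_lim_seq_minus'.
        + apply (filterlim_comp _ _ _ (Rbar_loc_seq 0) KF eventually (locally 0)); [exact He|].
          apply KF_cont.
        + apply (filterlim_comp _ _ _ (fun n => - Rbar_loc_seq 0 n) KF eventually (locally (- 0))).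
          * apply (is_lim_seq_opp (Rbar_loc_seq 0) 0). exact He.
          * apply KF_cont. }
    rewrite (is_lim_seq_unique _ _ Hl). simpl. rewrite Ropp_0, KF_0, Rabs_pos_eq by lra. ring.
Qed.

Definition Pm (a cs : R) (x : R) : R :=
  (- (1 - x / (x + cs) * exp (- (a * cs / (x + cs)))) * ln (1 + x)
   + KF (- (a * cs / (x + cs))) + ln (cs * (1 + x) / (x + cs))
   + exp (- (cs * a / (cs - 1))) / (cs - 1) *
     (ln (cs * (1 + x) / (x + cs)) + KF (a / (cs - 1) * (cs * (1 + x) / (x + cs))))) / ln 2.

Definition fe (a cs eta : R) : R :=
  exp (- a) * (1 + a) * cs * exp (eta * a / (eta + cs))
  * (eta + cs / (1 + a)) / (eta + cs) ^ 3.

Lemma KF_Derive' z : Derive (fun y => KF y) z = kf z.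
Proof. apply KF_Derive. Qed.

Lemma ln2_pos : 0 < ln 2.
Proof. rewrite <- ln_1. apply ln_increasing; lra. Qed.

Lemma Pm_deriv a cs x : 0 < a -> 0 < cs -> cs <> 1 -> 0 <= x ->
  is_derive (Pm a cs) x (log2 (1 + x) * fe a cs x).
Proof.
  intros Ha Hcs Hc1 Hx. unfold Pm.
  assert (Hxc : 0 < x + cs) by lra.
  assert (Hq : 0 < cs * (1 + x) / (x + cs)) by (apply Rdiv_lt_0_compat; nra).
  assert (Hc1' : cs - 1 <> 0) by lra.
  auto_derive.
  - repeat split; try lra; try (eexists; apply KF_deriv).
  - rewrite !KF_Derive'.
    assert (Z1 : - (a * cs * / (x + cs)) <> 0).
    { assert (0 < a * cs * / (x + cs)) by (apply Rdiv_lt_0_compat; nra). lra. }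
    assert (Z2 : a / (cs - 1) * (cs * (1 + x) * / (x + cs)) <> 0).
    { apply Rmult_integral_contrapositive_currified.
      - unfold Rdiv. apply Rmult_integral_contrapositive_currified; [lra|]. apply Rinv_neq_0_compat; lra.
      - fold (Rdiv (cs * (1 + x)) (x + cs)). lra. }
    rewrite (kf_nz _ Z1), (kf_nz _ Z2).
    assert (e1 : exp (a / (cs - 1) * (cs * (1 + x) * / (x + cs))) =
                 exp (cs * a / (cs - 1)) * exp (- (a * cs * / (x + cs)))).
    { rewrite <- exp_plus. f_equal. field. split; lra. }
    assert (e2 : exp (x * a / (x + cs)) = exp a * exp (- (a * cs * / (x + cs)))).
    { rewrite <- exp_plus. f_equal. field. lra. }
    unfold fe, log2. rewrite e1, e2.
    rewrite !exp_Ropp.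
    assert (P1 := exp_pos a). assert (P2 := exp_pos (cs * a / (cs - 1))).
    assert (P3 := exp_pos (a * cs * / (x + cs))).
    assert (P4 := ln2_pos).
    field. repeat split; lra.
Qed.

Lemma exp_le_mono y z : y <= z -> exp y <= exp z.
Proof. intros [H|H]; [left; apply exp_increasing; auto | rewrite H; lra]. Qed.

Lemma lim_plus {T} {F : (T -> Prop) -> Prop} {FF : Filter F} (f g : T -> R) a b :
  filterlim f F (locally a) -> filterlim g F (locally b) ->
  filterlim (fun x => f x + g x) F (locally (a + b)).
Proof.
  intros Hf Hg. apply (filterlim_comp_2 (G := locally a) (H := locally b) f g Rplus); auto.
  apply (filterlim_plus a b).
Qed.

Lemma lim_mult {T} {F : (T -> Prop) -> Prop} {FF : Filter F} (f g : T -> R) a b :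
  filterlim f F (locally a) -> filterlim g F (locally b) ->
  filterlim (fun x => f x * g x) F (locally (a * b)).
Proof.
  intros Hf Hg. apply (filterlim_comp_2 (G := locally a) (H := locally b) f g Rmult); auto.
  apply (@filterlim_mult R_AbsRing a b).
Qed.

Lemma lim_inv_pinf cs : filterlim (fun x => / (x + cs)) (Rbar_locally p_infty) (locally 0).
Proof.
  apply filterlim_locally. intros eps.
  exists (/ eps - cs). intros x Hx. apply ball_R.
  assert (He := cond_pos eps).
  assert (Hp : 0 < x + cs).
  { assert (0 < / eps) by (apply Rinv_0_lt_compat; lra). lra. }
  rewrite Rminus_0_r, Rabs_pos_eq by (left; apply Rinv_0_lt_compat; lra).
  rewrite <- (Rinv_inv eps). apply Rinv_lt_contravar.
  - apply Rmult_lt_0_compat; [apply Rinv_0_lt_compat|]; lra.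
  - lra.
Qed.

Lemma T1_lim a cs : 0 < a -> 0 < cs ->
  filterlim (fun x => - (1 - x / (x + cs) * exp (- (a * cs / (x + cs)))) * ln (1 + x))
    (Rbar_locally p_infty) (locally 0).
Proof.
  intros Ha Hcs.
  set (C := (1 + a) * Rmax cs 1).
  assert (HC : 0 < C) by (unfold C; apply Rmult_lt_0_compat; [lra| apply Rlt_le_trans with 1; [lra|apply Rmax_r]]).
  apply filterlim_locally. intros eps.
  assert (He : 0 < eps / C) by (apply Rdiv_lt_0_compat; [apply cond_pos|lra]).
  destruct (is_lim_div_ln_p (ball 0 (mkposreal _ He))) as [M HM].
  { exists (mkposreal _ He). auto. }
  exists (Rmax M 0). intros x Hx. apply ball_R.
  assert (Hx0 : 0 < x) by (apply Rle_lt_trans with (Rmax M 0); [apply Rmax_r|lra]).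
  assert (HxM : M < 1 + x) by (apply Rle_lt_trans with (Rmax M 0); [apply Rmax_l|lra]).
  specialize (HM (1 + x) HxM). unfold ball in HM; simpl in HM; unfold AbsRing_ball, abs, minus, plus, opp in HM; simpl in HM.
  rewrite Ropp_0, Rplus_0_r in HM.
  assert (Hl : 0 <= ln (1 + x)) by (rewrite <- ln_1; apply ln_le; lra).
  rewrite Rabs_pos_eq in HM by (apply Rmult_le_pos; [lra| left; apply Rinv_0_lt_compat; lra]).
  set (u := x / (x + cs)).
  assert (Hu : 0 <= u <= 1).
  { unfold u; split. apply Rmult_le_pos; [lra| left; apply Rinv_0_lt_compat; lra].
    apply Rmult_le_reg_r with (x + cs); [lra|]. unfold Rdiv. rewrite Rmult_assoc, Rinv_l by lra. lra. }
  assert (H1u : 1 - u = cs / (x + cs)) by (unfold u; field; lra).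
  assert (Hw : a * cs / (x + cs) = a * (1 - u)) by (rewrite H1u; unfold Rdiv; ring).
  rewrite Hw.
  assert (Ex1 : exp (- (a * (1 - u))) <= 1) by (apply Rle_trans with (exp 0); [|rewrite exp_0; lra]; apply exp_le_mono; assert (0 <= a * (1 - u)) by (apply Rmult_le_pos; lra); lra).
  assert (Ex2 := exp_ineq1_le (- (a * (1 - u)))).
  assert (HG1 : 0 <= 1 - u * exp (- (a * (1 - u)))).
  { assert (0 < exp (- (a * (1 - u)))) by apply exp_pos. nra. }
  assert (HG2 : 1 - u * exp (- (a * (1 - u))) <= (1 + a) * (1 - u)) by nra.
  assert (Hcx : 1 - u <= Rmax cs 1 / (1 + x)).
  { rewrite H1u. apply Rmult_le_reg_r with ((x + cs) * (1 + x)); [nra|].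
    replace (cs / (x + cs) * ((x + cs) * (1 + x))) with (cs * (1 + x)) by (field; lra).
    replace (Rmax cs 1 / (1 + x) * ((x + cs) * (1 + x))) with (Rmax cs 1 * (x + cs)) by (field; lra).
    unfold Rmax; destruct (Rle_dec cs 1); nra. }
  assert (Hfin : (1 - u * exp (- (a * (1 - u)))) * ln (1 + x) <= C * (ln (1 + x) / (1 + x))).
  { apply Rle_trans with ((1 + a) * (1 - u) * ln (1 + x)).
    - apply Rmult_le_compat_r; auto.
    - unfold C. replace ((1 + a) * Rmax cs 1 * (ln (1 + x) / (1 + x))) with
        ((1 + a) * (Rmax cs 1 / (1 + x)) * ln (1 + x)) by (field; lra).
      apply Rmult_le_compat_r; auto. apply Rmult_le_compat_l; lra. }
  assert (C * (ln (1 + x) / (1 + x)) < eps).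
  { replace (pos eps) with (C * (eps / C)) by (field; lra). apply Rmult_lt_compat_l; auto. }
  rewrite Rminus_0_r, Rabs_left1 by nra. lra.
Qed.

Definition Psi (a cs w : R) : R :=
  KF (- (a * cs * w)) + ln (cs * (1 - (cs - 1) * w))
  + exp (- (cs * a / (cs - 1))) / (cs - 1) *
    (ln (cs * (1 - (cs - 1) * w)) + KF (a / (cs - 1) * (cs * (1 - (cs - 1) * w)))).

Lemma Pm_lim_inf a cs : 0 < a -> 0 < cs -> cs <> 1 ->
  filterlim (Pm a cs) (Rbar_locally p_infty) (locally ((0 + Psi a cs 0) * / ln 2)).
Proof.
  intros Ha Hcs Hc1.
  apply filterlim_ext_loc with
    (fun x => (- (1 - x / (x + cs) * exp (- (a * cs / (x + cs)))) * ln (1 + x) + Psi a cs (/ (x + cs))) * / ln 2).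
  - exists 0. intros x Hx. unfold Pm, Psi.
    replace (cs * (1 + x) / (x + cs)) with (cs * (1 - (cs - 1) * / (x + cs))) by (field; lra).
    unfold Rdiv at 11. unfold Rdiv. ring.
  - apply lim_mult; [|apply filterlim_const].
    apply lim_plus.
    + apply T1_lim; auto.
    + apply (filterlim_comp _ _ _ (fun x => / (x + cs)) (Psi a cs) _ (locally 0)).
      * apply lim_inv_pinf.
      * apply (@ex_derive_continuous R_AbsRing R_NormedModule). unfold Psi. auto_derive.
        repeat split; try (eexists; apply KF_deriv). nra. nra.
Qed.

Lemma Pm_lim_0 a cs : 0 < a -> 0 < cs -> cs <> 1 ->
  filterlim (Pm a cs) (at_right 0) (locally (Pm a cs 0)).
Proof.
  intros Ha Hcs Hc1.
  apply (filterlim_filter_le_1 (F := locally 0)).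
  - apply filter_le_within.
  - apply (@ex_derive_continuous R_AbsRing R_NormedModule).
    eexists. apply Pm_deriv; auto; lra.
Qed.

Theorem theorem1 (ks cs : R) (hks : 0 < ks) (hcs : 0 < cs) (hcs1 : cs <> 1) :
  is_RInt_gen (fun eta => log2 (1 + eta) * f_eta ks cs eta)
    (at_right 0) (Rbar_locally p_infty)
    (/ ln 2 *
     (ln (cs * ks ^ 2) + ExpInt_E1 (ks ^ 2) + euler_gamma
      + exp (- (cs * ks ^ 2 / (cs - 1))) / (cs - 1)
        * (ExpInt_Ei (cs * ks ^ 2 / (cs - 1)) - ExpInt_Ei (ks ^ 2 / (cs - 1))))).
Proof.
  assert (Ha : 0 < ks ^ 2) by (apply pow_lt; lra).
  assert (Hc1 : cs - 1 <> 0) by lra.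
  assert (Hd : ks ^ 2 / (cs - 1) <> 0).
  { unfold Rdiv. apply Rmult_integral_contrapositive_currified; [lra|]. apply Rinv_neq_0_compat; lra. }
  assert (Hb : cs * ks ^ 2 / (cs - 1) <> 0).
  { unfold Rdiv. apply Rmult_integral_contrapositive_currified; [nra|]. apply Rinv_neq_0_compat; lra. }
  rewrite E1_val by lra. rewrite !Ei_val by auto.
  assert (Eabs : Rabs (cs * ks ^ 2 / (cs - 1)) = cs * Rabs (ks ^ 2 / (cs - 1))).
  { unfold Rdiv. rewrite Rmult_assoc, Rabs_mult, Rabs_pos_eq by lra. reflexivity. }
  assert (Hdp : 0 < Rabs (ks ^ 2 / (cs - 1))) by (apply Rabs_pos_lt; auto).
  rewrite Eabs, ln_mult by lra. rewrite ln_mult by lra.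
  set (a := ks ^ 2) in *.
  replace (/ ln 2 * (ln cs + ln a + Ef a + euler_gamma +
     exp (- (cs * a / (cs - 1))) / (cs - 1) *
     (euler_gamma + (ln cs + ln (Rabs (a / (cs - 1)))) + KF (cs * a / (cs - 1)) -
      (euler_gamma + ln (Rabs (a / (cs - 1))) + KF (a / (cs - 1))))))
    with ((0 + Psi a cs 0) * / ln 2 - Pm a cs 0).
  2:{ unfold Psi, Pm, Ef, Lf.
      replace (- (a * cs * 0)) with 0 by ring. rewrite KF_0.
      replace (cs * (1 - (cs - 1) * 0)) with cs by ring.
      replace (a / (cs - 1) * cs) with (cs * a / (cs - 1)) by (field; auto).
      replace (0 / (0 + cs)) with 0 by (field; lra).
      replace (a * cs / (0 + cs)) with a by (field; lra).
      replace (cs * (1 + 0) / (0 + cs)) with 1 by (field; lra).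
      replace (1 + 0) with 1 by ring. rewrite ln_1.
      replace (a / (cs - 1) * 1) with (a / (cs - 1)) by ring.
      field. split; auto. apply Rgt_not_eq, ln2_pos. }
  change (fun eta => log2 (1 + eta) * f_eta ks cs eta) with (fun eta => log2 (1 + eta) * fe a cs eta).
  apply (RInt_gen_anti _ (Pm a cs)).
  - exists (fun x => 0 < x) (fun y => 0 < y).
    + exists (mkposreal 1 Rlt_0_1). intros y _ Hy. exact Hy.
    + exists 0. auto.
    + intros x y Hx Hy t Ht. simpl in Ht.
      assert (Ht0 : 0 < t).
      { destruct (Rle_dec x y); [rewrite Rmin_left in Ht | rewrite Rmin_right in Ht]; lra. }
      split.
      * apply Pm_deriv; auto; lra.
      * apply (@ex_derive_continuous R_AbsRing R_NormedModule). unfold log2, fe. auto_derive.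
        assert (0 < t + cs) by lra. repeat split; try lra. apply Rgt_not_eq. repeat apply Rmult_lt_0_compat; lra.
  - apply Pm_lim_0; auto.
  - apply Pm_lim_inf; auto.
Qed.
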